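(* Let $S\subset\mathbb{P}^6$ be the surface defined by $$x_1^2-x_2x_4=x_1x_5-x_3x_4=x_1x_3-x_2x_5=x_1x_6-x_3x_5=x_2x_6-x_3^2=x_4x_6-x_5^2=0,$$ $$x_1^2+x_1x_4+x_5x_7=x_1x_2+x_1^2+x_3x_7=x_1x_3+x_1x_5+x_6x_7=0,$$ let $U\subset S$ be the complement in $S$ of the three lines $x_1=x_2=x_3=x_5=x_6=0$, $x_1=x_3=x_4=x_5=x_6=0$, and $x_3=x_5=x_6=x_1+x_4=x_1+x_2=0$, and let $N_U(B)=\#\{x\in U(\mathbb{Q}):H(x)\leq B\}$. For $s_0\in\mathbb{R}$, $\mathbf{s}=(s_1,s_2,s_3)$, $\mathbf{y}=(y_1,y_2,y_3)\in\mathbb{R}^3$ define $$\Psi(s_0,\mathbf{s},\mathbf{y})=\max\{|s_0^3s_1^2s_2^2s_3^2|,\ |y_1y_2y_3|,\ |s_0s_1^2y_1^2|,\ |s_0s_2^2y_2^2|\}.$$ Then $$N_U(B)=2\,\#\left\{(s_0,\mathbf{s},\mathbf{y})\in\mathbb{Z}^7:\ \begin{array}{l}\Psi(s_0,\mathbf{s},\mathbf{y})\leq B,\ \ s_1y_1-s_2y_2+s_3y_3=0,\\ s_0,s_1,s_2,s_3,y_1>0,\\ \gcd(y_i,s_0s_js_k)=1,\ \gcd(s_i,s_j)=1\end{array}\right\}+O(B),$$ where in the coprimality conditions $\{i,j,k\}$ runs over all permutations of $\{1,2,3\}$.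
   Context: For $x\in\mathbb{P}^{6}(\mathbb{Q})$ written as $x=[\mathbf{x}]$ with $\mathbf{x}\in\mathbb{Z}^7$ primitive, $H(x)=\max_i|x_i|$. The $O$-constant is absolute; $B\geq 1$. *)

(* Defs.v *)
From mathcomp Require Import all_boot all_order all_algebra.
From mathcomp Require Import reals.
Set Implicit Arguments. Unset Strict Implicit. Unset Printing Implicit Defensive.
Import Order.TTheory GRing.Theory Num.Theory.
Local Open Scope ring_scope.

Definition zrange (K : nat) : seq int :=
  [seq (i%:Z - K%:Z) | i <- iota 0 (2 * K).+1].

Fixpoint box (n K : nat) : seq (seq int) :=
  if n is n'.+1 then [seq a :: v | a <- zrange K, v <- box n' K] else [:: [::]].

Definition gcd_seq (s : seq int) : int := foldr gcdz 0 s.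
Definition primitive (s : seq int) : bool := gcd_seq s == 1.

Definition height (s : seq int) : nat := foldr maxn 0%N (map absz s).

(* x and -x represent the same point of P^6; we pick the representative
   whose first nonzero coordinate is positive. *)
Definition first_nz_pos (s : seq int) : bool :=
  if [seq a <- s | a != 0] is a :: _ then 0 < a else false.

Definition onS (x1 x2 x3 x4 x5 x6 x7 : int) : bool :=
  [&& x1 ^+ 2 - x2 * x4 == 0, x1 * x5 - x3 * x4 == 0, x1 * x3 - x2 * x5 == 0,
      x1 * x6 - x3 * x5 == 0, x2 * x6 - x3 ^+ 2 == 0, x4 * x6 - x5 ^+ 2 == 0,
      x1 ^+ 2 + x1 * x4 + x5 * x7 == 0, x1 * x2 + x1 ^+ 2 + x3 * x7 == 0
    & x1 * x3 + x1 * x5 + x6 * x7 == 0].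

Definition line1 (x1 x2 x3 x4 x5 x6 x7 : int) : bool :=
  [&& x1 == 0, x2 == 0, x3 == 0, x5 == 0 & x6 == 0].
Definition line2 (x1 x2 x3 x4 x5 x6 x7 : int) : bool :=
  [&& x1 == 0, x3 == 0, x4 == 0, x5 == 0 & x6 == 0].
Definition line3 (x1 x2 x3 x4 x5 x6 x7 : int) : bool :=
  [&& x3 == 0, x5 == 0, x6 == 0, x1 + x4 == 0 & x1 + x2 == 0].

Definition inU (x1 x2 x3 x4 x5 x6 x7 : int) : bool :=
  [&& onS x1 x2 x3 x4 x5 x6 x7, ~~ line1 x1 x2 x3 x4 x5 x6 x7,
      ~~ line2 x1 x2 x3 x4 x5 x6 x7 & ~~ line3 x1 x2 x3 x4 x5 x6 x7].

Definition app7 (P : int -> int -> int -> int -> int -> int -> int -> bool)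
  (s : seq int) : bool :=
  P (nth 0 s 0) (nth 0 s 1) (nth 0 s 2) (nth 0 s 3) (nth 0 s 4) (nth 0 s 5)
    (nth 0 s 6).

(* N_U(B) = #{x in U(Q) : H(x) <= B}; each rational point is counted through
   its unique primitive integer representative with first nonzero coordinate
   positive.  Every such representative with H(x) <= B lies in box 7 (trunc B). *)
Definition N_U (R : realType) (B : R) : nat :=
  count (fun s => [&& primitive s, first_nz_pos s, app7 inU s
                    & (height s)%:R <= B]) (box 7 (Num.truncn B)).

Definition Psi (R : realType) (s0 s1 s2 s3 y1 y2 y3 : int) : R :=
  Num.max (Num.max (`|s0 ^+ 3 * s1 ^+ 2 * s2 ^+ 2 * s3 ^+ 2|%:~R)
                   (`|y1 * y2 * y3|%:~R))
          (Num.max (`|s0 * s1 ^+ 2 * y1 ^+ 2|%:~R)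
                   (`|s0 * s2 ^+ 2 * y2 ^+ 2|%:~R)).

Definition Tcond (R : realType) (B : R) (s0 s1 s2 s3 y1 y2 y3 : int) : bool :=
  [&& Psi R s0 s1 s2 s3 y1 y2 y3 <= B,
      s1 * y1 - s2 * y2 + s3 * y3 == 0,
      [&& 0 < s0, 0 < s1, 0 < s2, 0 < s3 & 0 < y1],
      [&& coprimez y1 (s0 * s2 * s3), coprimez y2 (s0 * s1 * s3)
        & coprimez y3 (s0 * s1 * s2)]
    & [&& coprimez s1 s2, coprimez s1 s3 & coprimez s2 s3]].

(* #{(s0,s,y) in Z^7 : ...}; every element of this set has all coordinates
   bounded by B in absolute value, hence lies in box 7 (trunc B). *)
Definition T_count (R : realType) (B : R) : nat :=
  count (fun v => Tcond B (nth 0 v 0) (nth 0 v 1) (nth 0 v 2) (nth 0 v 3)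
                    (nth 0 v 4) (nth 0 v 5) (nth 0 v 6))
        (box 7 (Num.truncn B)).

(* Main.v *)
Require Import Defs.
From mathcomp Require Import all_boot all_order all_algebra.
From mathcomp Require Import reals.
From mathcomp Require Import zify ring lra.
Import Order.TTheory GRing.Theory Num.Theory.
Local Open Scope ring_scope.
Set Implicit Arguments. Unset Strict Implicit. Unset Printing Implicit Defensive.

Lemma mem_zrange (K : nat) (a : int) : (a \in zrange K) = (`|a| <= K)%N.
Proof.
apply/mapP/idP.
  move=> [i]; rewrite mem_iota add0n => /andP[_ hi] ->.
  rewrite -lez_nat abszE ler_norml. apply/andP; split; lia.
rewrite -lez_nat abszE ler_norml => /andP[h1 h2].
exists (absz (a + K%:Z)).
  rewrite mem_iota add0n leq0n /= -ltz_nat.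
  have -> : (absz (a + K%:Z))%:Z = a + K%:Z by apply/gez0_abs; lia.
  lia.
have -> : (absz (a + K%:Z))%:Z = a + K%:Z by apply/gez0_abs; lia.
ring.
Qed.

Lemma zrange_uniq K : uniq (zrange K).
Proof.
rewrite map_inj_uniq ?iota_uniq // => i j /= h.
apply/eqP; rewrite -eqz_nat; apply/eqP. lia.
Qed.

Lemma mem_box n K (v : seq int) :
  (v \in box n K) = (size v == n) && all (fun a => `|a| <= K)%N v.
Proof.
elim: n v => [|n IH] v.
  by case: v.
change (box n.+1 K) with [seq a :: w | a <- zrange K, w <- box n K].
apply/allpairsP/idP.
  move=> [[a w] /= [ha hw ->]]. rewrite /= IH in hw. rewrite mem_zrange in ha.
  rewrite /= ha /=; exact: hw.
case: v => [|a w] //= /andP[hs /andP[ha hw]].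
exists (a, w) => /=; split => //; first by rewrite mem_zrange.
by rewrite IH -(eqSS (size w)) hs.
Qed.

Lemma box_uniq n K : uniq (box n K).
Proof.
elim: n => [|n IH] //.
change (box n.+1 K) with [seq a :: w | a <- zrange K, w <- box n K].
apply: allpairs_uniq => //; first exact: zrange_uniq.
by move=> [a v] [b w] _ _ /= [-> ->].
Qed.

Lemma size_box n K : size (box n K) = ((2 * K).+1 ^ n)%N.
Proof.
elim: n => [|n IH] //.
change (box n.+1 K) with [seq a :: w | a <- zrange K, w <- box n K].
by rewrite size_allpairs IH size_map size_iota expnS.
Qed.

Lemma count_le_inj (T1 T2 : eqType) (f : T1 -> T2) (P : pred T1) (Q : pred T2)
  (s1 : seq T1) (s2 : seq T2) :
  uniq s1 ->
  (forall x, x \in s1 -> P x -> Q (f x) && (f x \in s2)) ->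
  (forall x y, x \in s1 -> P x -> y \in s1 -> P y -> f x = f y -> x = y) ->
  (count P s1 <= count Q s2)%N.
Proof.
move=> u1 hf hinj.
rewrite -!size_filter -(size_map f).
apply: uniq_leq_size.
  rewrite map_inj_in_uniq ?filter_uniq //.
  move=> x y; rewrite !mem_filter => /andP[px xs] /andP[py ys]; exact: hinj.
move=> z /mapP[x]; rewrite mem_filter => /andP[px xs] ->.
by rewrite mem_filter; apply: hf.
Qed.

Lemma count_le_surj (T1 T2 : eqType) (f : T1 -> T2) (P : pred T1) (Q : pred T2)
  (s1 : seq T1) (s2 : seq T2) :
  uniq s2 ->
  (forall y, y \in s2 -> Q y -> exists x, [/\ x \in s1, P x & f x = y]) ->
  (count Q s2 <= count P s1)%N.
Proof.
move=> u2 hs.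
rewrite -!size_filter -(size_map f (filter P s1)).
apply: uniq_leq_size; first by rewrite filter_uniq.
move=> y; rewrite mem_filter => /andP[qy ys].
have [x [xs px <-]] := hs y ys qy.
by apply: map_f; rewrite mem_filter px.
Qed.

Lemma count_split3 (T : Type) (a b c d : pred T) (s : seq T) :
  (forall x, a x = (b x + c x + d x)%N :> nat) ->
  count a s = (count b s + count c s + count d s)%N.
Proof.
move=> h; elim: s => [|x s IH] //=.
rewrite IH h. lia.
Qed.

Lemma prime_dvdM (p : nat) (m n : int) : prime p ->
  (p%:Z %| m * n)%Z = (p%:Z %| m)%Z || (p%:Z %| n)%Z.
Proof. by move=> pp; rewrite !dvdzE abszM /= Euclid_dvdM. Qed.

Lemma prime_cop (p : nat) (m n : int) : prime p ->
  (p%:Z %| m)%Z -> (p%:Z %| n)%Z -> coprimez m n -> False.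
Proof.
move=> pp; rewrite !dvdzE /= coprimezE => hm hn /eqP h.
have : (p %| gcdn `|m| `|n|)%N by rewrite dvdn_gcd hm hn.
rewrite h dvdn1 => /eqP p1. by rewrite p1 in pp.
Qed.

Lemma gcd1_by_primes (g : int) : g != 0 ->
  (forall p : nat, prime p -> (p%:Z %| g)%Z -> False) -> `|g|%N = 1%N.
Proof.
move=> g0 h; have n0 : (0 < `|g|)%N by rewrite absz_gt0.
case: (ltngtP `|g|%N 1) => // [|h1]; first by move=> h1; move: n0; rewrite lt0n; case: (absz g) h1.
exfalso; apply: (h (pdiv `|g|)); first exact: pdiv_prime.
by rewrite dvdzE /= pdiv_dvd.
Qed.

Lemma bezout3 (a b c : int) : gcdz (gcdz a b) c = 1 ->
  exists u v w, u * a + v * b + w * c = 1.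
Proof.
move=> h.
have [u1 [v1 e1]] := Bezoutz a b.
have [u2 [v2 e2]] := Bezoutz (gcdz a b) c.
exists (u2 * u1), (u2 * v1), v2.
by rewrite -h -e2 -e1; ring.
Qed.

Lemma G1 (l a b c d : int) : (exists u v w, u * a + v * b + w * c = 1) ->
  (d %| l * a * b)%Z -> (d %| l * a ^+ 2)%Z -> (d %| l * c * a)%Z ->
  (d %| l * b ^+ 2)%Z -> (d %| l * c * b)%Z -> (d %| l * c ^+ 2)%Z ->
  (d %| l)%Z.
Proof.
move=> [u [v [w e]]] h1 h2 h3 h4 h5 h6.
have -> : l = l * (u * a + v * b + w * c) ^+ 2 by rewrite e expr1n mulr1.
have -> : l * (u * a + v * b + w * c) ^+ 2 = u^+2 * (l * a ^+ 2) + v^+2 * (l * b^+2) + w^+2 * (l * c^+2)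
   + (2 * u * v) * (l * a * b) + (2 * u * w) * (l * c * a) + (2 * v * w) * (l * c * b).
  ring.
by rewrite !rpredD // dvdz_mull.
Qed.

Definition pt (l a b c x7 : int) : seq int :=
  [:: l * a * b; l * a ^+ 2; l * c * a; l * b ^+ 2; l * c * b; l * c ^+ 2; x7].
Definition nrm (x : seq int) : seq int :=
  if first_nz_pos x then x else map -%R x.

Lemma seq7 (x : seq int) : size x = 7%N ->
  x = [:: nth 0 x 0; nth 0 x 1; nth 0 x 2; nth 0 x 3; nth 0 x 4; nth 0 x 5; nth 0 x 6].
Proof. by do 7 (case: x => [|? x] //); case: x. Qed.

Lemma gcd_seqN x : gcd_seq (map -%R x) = gcd_seq x.
Proof. by elim: x => [|a x IH] //=; rewrite gcdNz IH. Qed.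

Lemma heightN x : height (map -%R x) = height x.
Proof. by elim: x => [|a x IH] //=; rewrite /height /= abszN; congr maxn. Qed.

Lemma dvd_gcd_seq d x : (d %| gcd_seq x)%Z = all (fun a => d %| a)%Z x.
Proof. by elim: x => [|a x IH] /=; [rewrite dvdz0 | rewrite dvdz_gcd IH]. Qed.

Lemma onS_pt l a b c x7 : c * x7 = - (l * a * b * (a + b)) ->
  app7 onS (pt l a b c x7).
Proof.
move=> h; rewrite /app7 /onS /=.
have -> : (l * a * b) ^+ 2 + l * a * b * (l * b ^+ 2) + l * c * b * x7
          = l * b * (c * x7) + l^+2 * a * b^+2 * (a + b) by ring.
have -> : l * a * b * (l * a ^+ 2) + (l * a * b) ^+ 2 + l * c * a * x7
          = l * a * (c * x7) + l^+2 * a^+2 * b * (a + b) by ring.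
have -> : l * a * b * (l * c * a) + l * a * b * (l * c * b) + l * c ^+ 2 * x7
          = l * c * (c * x7) + l^+2 * a * b * c * (a + b) by ring.
rewrite h.
by repeat (apply/andP; split); apply/eqP; ring.
Qed.

Lemma inUN x : size x = 7%N -> app7 inU (map -%R x) = app7 inU x.
Proof.
move=> /seq7 ->; rewrite /app7 /inU /onS /line1 /line2 /line3 /=.
by rewrite !sqrrN !mulrNN -!opprD !oppr_eq0.
Qed.

Lemma first_nzN x : has (fun a => a != 0) x ->
  first_nz_pos (map -%R x) = ~~ first_nz_pos x.
Proof.
move=> hx; rewrite /first_nz_pos filter_map.
have -> : [seq a <- x | preim -%R (fun a => a != 0) a] = [seq a <- x | a != 0].
  by apply: eq_filter => a /=; rewrite oppr_eq0.
have : [seq a <- x | a != 0] != [::] by rewrite -has_filter.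
case E : [seq a <- x | a != 0] => [|a s] //= _.
have : a \in [seq a <- x | a != 0] by rewrite E mem_head.
rewrite mem_filter => /andP[a0 _].
have a0' : (0 == a) = false by rewrite eq_sym; exact: negbTE.
by rewrite oppr_gt0 ltNge le_eqVlt a0'.
Qed.

Lemma nrm_id x : first_nz_pos x -> nrm x = x.
Proof. by rewrite /nrm => ->. Qed.

Lemma nrm_N x : has (fun a => a != 0) x -> first_nz_pos x -> nrm (map -%R x) = x.
Proof.
move=> hx hf; rewrite /nrm first_nzN // hf /=.
by rewrite -map_comp map_id_in // => a _ /=; rewrite opprK.
Qed.

Lemma nrm_cases x : nrm x = x \/ nrm x = map -%R x.
Proof. by rewrite /nrm; case: ifP; [left|right]. Qed.

Lemma height_ge a x : a \in x -> (`|a| <= height x)%N.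
Proof.
elim: x => [|b x IH] //=; rewrite in_cons /height /= => /orP[/eqP ->|/IH h].
  exact: leq_maxl.
by rewrite leq_max h orbT.
Qed.

Lemma height_le (R : realType) (B : R) x : 0 <= B ->
  (forall a, a \in x -> (`|a|%:R <= B)) -> (height x)%:R <= B.
Proof.
move=> B0; elim: x => [|a x IH] h //=.
rewrite /height /= natr_max ge_max h ?mem_head //=.
by apply: IH => b hb; apply: h; rewrite in_cons hb orbT.
Qed.

Lemma box_of_height (R : realType) (B : R) x : 0 <= B -> size x = 7%N ->
  (height x)%:R <= B -> x \in box 7 (Num.truncn B).
Proof.
move=> B0 sx hB; rewrite mem_box sx eqxx /=.
apply/allP => a ha.
apply: leq_trans (height_ge ha) _.
by rewrite truncn_ge_nat.
Qed.

Definition tors (s0 s1 s2 s3 y1 y2 y3 : int) : Prop :=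
  [/\ 0 < s0, 0 < s1, 0 < s2, 0 < s3 &
   [/\ coprimez y1 (s0 * s2 * s3), coprimez y2 (s0 * s1 * s3),
       coprimez y3 (s0 * s1 * s2),
       (coprimez s1 s2 /\ coprimez s1 s3 /\ coprimez s2 s3) &
       s1 * y1 - s2 * y2 + s3 * y3 = 0]].

Lemma ndvd (p : nat) (y m : int) : prime p -> (p%:Z %| y)%Z -> coprimez y m ->
  (p%:Z %| m)%Z = false.
Proof. move=> pp hy c; apply/negP => hm; exact: (prime_cop pp hy hm c). Qed.

Lemma gcdz_pos1 (g : int) : g != 0 -> 0 <= g -> `|g|%N = 1%N -> g = 1.
Proof. by move=> _ g0 h; rewrite -(gez0_abs g0) h. Qed.

Lemma tors_abc s0 s1 s2 s3 y1 y2 y3 : tors s0 s1 s2 s3 y1 y2 y3 ->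
  gcdz (gcdz (s1 * y1) (- (s2 * y2))) (s0 * s1 * s2 * s3) = 1.
Proof.
case=> h0 h1 h2 h3 [c1 c2 c3 [c12 [c13 c23]] rel].
have cn0 : s0 * s1 * s2 * s3 != 0.
  by rewrite !mulf_eq0 (gt_eqF h0) (gt_eqF h1) (gt_eqF h2) (gt_eqF h3).
apply: gcdz_pos1 => //.
- by rewrite gcdz_eq0 negb_and cn0 orbT.
apply: gcd1_by_primes; first by rewrite gcdz_eq0 negb_and cn0 orbT.
move=> p pp; rewrite !dvdz_gcd rpredN !prime_dvdM // => /andP[/andP[ha hb] hc].
case/orP: ha => ha; case/orP: hb => hb.
- exact: (prime_cop pp ha hb c12).
- by apply: (prime_cop pp hb _ c2); rewrite !prime_dvdM // ha ?orbT.
- by apply: (prime_cop pp ha _ c1); rewrite !prime_dvdM // hb ?orbT.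
case/orP: hc => [/orP[/orP[hs|hs]|hs]|hs].
- by apply: (prime_cop pp ha _ c1); rewrite !prime_dvdM // hs ?orbT.
- by apply: (prime_cop pp hb _ c2); rewrite !prime_dvdM // hs ?orbT.
- by apply: (prime_cop pp ha _ c1); rewrite !prime_dvdM // hs ?orbT.
- by apply: (prime_cop pp ha _ c1); rewrite !prime_dvdM // hs ?orbT.
Qed.

Lemma tors_prim s0 s1 s2 s3 y1 y2 y3 : tors s0 s1 s2 s3 y1 y2 y3 ->
  primitive (pt s0 (s1 * y1) (- (s2 * y2)) (s0 * s1 * s2 * s3) (- (y1 * y2 * y3))).
Proof.
move=> H; case: (H) => h0 h1 h2 h3 [c1 c2 c3 [c12 [c13 c23]] rel].
have cn0 : s0 * s1 * s2 * s3 != 0.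
  by rewrite !mulf_eq0 (gt_eqF h0) (gt_eqF h1) (gt_eqF h2) (gt_eqF h3).
set x := pt _ _ _ _ _.
have x6n0 : s0 * (s0 * s1 * s2 * s3) ^+ 2 != 0.
  by rewrite mulf_eq0 (gt_eqF h0) expf_eq0 /= (negbTE cn0).
have g0 : gcd_seq x != 0.
  apply/negP => /eqP g0.
  have : all (fun a => gcd_seq x %| a)%Z x by rewrite -dvd_gcd_seq.
  rewrite g0 /x /= => /and5P[_ _ _ _ /and3P[_ ]].
  by rewrite dvd0z (negbTE x6n0).
rewrite /primitive; apply/eqP; apply: gcdz_pos1 => //.
apply: gcd1_by_primes => // p pp; rewrite dvd_gcd_seq /x /=.
move=> /and5P[hx1 hx2 hx3 hx4 /and3P[hx5 hx6 /andP[hx7 _]]].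
have Py1 : (p%:Z %| y1)%Z -> False.
  move=> hy.
  have := ndvd pp hy c1; rewrite !prime_dvdM // => /norP[/norP[n0 n2] n3].
  have : (p%:Z %| s0 * (s2 * y2) * (s2 * y2))%Z.
    by rewrite (_ : s0 * (s2 * y2) * (s2 * y2) = s0 * (- (s2 * y2)) ^+ 2) //; ring.
  rewrite !prime_dvdM // (negbTE n0) (negbTE n2) /= orbb => hy2.
  have := ndvd pp hy2 c2; rewrite !prime_dvdM // => /norP[/norP[_ n1] _].
  have : (p%:Z %| s0 * (s0 * s1 * s2 * s3) * (s0 * s1 * s2 * s3))%Z.
    by rewrite (_ : _ * _ * _ = s0 * (s0 * s1 * s2 * s3) ^+ 2) //; ring.
  by rewrite !prime_dvdM // (negbTE n0) (negbTE n1) (negbTE n2) (negbTE n3).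
have : (p%:Z %| y1 * y2 * y3)%Z by rewrite -rpredN.
rewrite !prime_dvdM // => /orP[/orP[hy|hy]|hy]; first exact: Py1.
- have := ndvd pp hy c2; rewrite !prime_dvdM // => /norP[/norP[n0 n1] _].
  have : (p%:Z %| s0 * (s1 * y1) * (s1 * y1))%Z.
    by rewrite (_ : _ * _ * _ = s0 * (s1 * y1) ^+ 2) //; ring.
  by rewrite !prime_dvdM // (negbTE n0) (negbTE n1) /= orbb.
- have := ndvd pp hy c3; rewrite !prime_dvdM // => /norP[/norP[n0 n1] _].
  have : (p%:Z %| s0 * (s1 * y1) * (s1 * y1))%Z.
    by rewrite (_ : _ * _ * _ = s0 * (s1 * y1) ^+ 2) //; ring.
  by rewrite !prime_dvdM // (negbTE n0) (negbTE n1) /= orbb.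
Qed.

Lemma gcd_fac (s m y : int) : 0 < s -> coprimez y m -> gcdz (s * m) (s * y) = s.
Proof.
move=> hs c; rewrite -mulz_gcdr gtz0_abs // gcdzC.
by move: c; rewrite /coprimez => /eqP ->; rewrite mulr1.
Qed.

Lemma tors_gcd s0 s1 s2 s3 y1 y2 y3 : tors s0 s1 s2 s3 y1 y2 y3 ->
  [/\ gcdz (s0 * s1 * s2 * s3) (s1 * y1) = s1,
      gcdz (s0 * s1 * s2 * s3) (- (s2 * y2)) = s2 &
      gcdz (s0 * s1 * s2 * s3) (s1 * y1 + - (s2 * y2)) = s3].
Proof.
case=> h0 h1 h2 h3 [c1 c2 c3 [c12 [c13 c23]] rel]; split.
- by rewrite (_ : s0 * s1 * s2 * s3 = s1 * (s0 * s2 * s3)) ?gcd_fac //; ring.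
- by rewrite gcdzN (_ : s0 * s1 * s2 * s3 = s2 * (s0 * s1 * s3)) ?gcd_fac //; ring.
have -> : s1 * y1 + - (s2 * y2) = - (s3 * y3).
  by rewrite -[RHS]add0r -rel; ring.
by rewrite gcdzN (_ : s0 * s1 * s2 * s3 = s3 * (s0 * s1 * s2)) ?gcd_fac //; ring.
Qed.

Lemma dvdz_anti_pos (a b : int) : 0 < a -> 0 < b -> (a %| b)%Z -> (b %| a)%Z -> a = b.
Proof.
move=> ha hb h1 h2; rewrite -(gtz0_abs ha) -(gtz0_abs hb); congr Posz.
by apply/eqP; rewrite eqn_dvd; apply/andP; split.
Qed.

Lemma G1_dir s0 s1 s2 s3 y1 y2 y3 l' a' b' c' :
  tors s0 s1 s2 s3 y1 y2 y3 ->
  s0 * (s1 * y1) * (- (s2 * y2)) = l' * a' * b' ->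
  s0 * (s1 * y1) ^+ 2 = l' * a' ^+ 2 ->
  s0 * (s0 * s1 * s2 * s3) * (s1 * y1) = l' * c' * a' ->
  s0 * (- (s2 * y2)) ^+ 2 = l' * b' ^+ 2 ->
  s0 * (s0 * s1 * s2 * s3) * (- (s2 * y2)) = l' * c' * b' ->
  s0 * (s0 * s1 * s2 * s3) ^+ 2 = l' * c' ^+ 2 ->
  (l' %| s0)%Z.
Proof.
move=> H e1 e2 e3 e4 e5 e6.
apply: (G1 (bezout3 (tors_abc H))).
- by rewrite e1 -mulrA dvdz_mulr.
- by rewrite e2 dvdz_mulr.
- by rewrite e3 -mulrA dvdz_mulr.
- by rewrite e4 dvdz_mulr.
- by rewrite e5 -mulrA dvdz_mulr.
- by rewrite e6 dvdz_mulr.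
Qed.

Lemma tors_inj s0 s1 s2 s3 y1 y2 y3 t0 t1 t2 t3 z1 z2 z3 :
  tors s0 s1 s2 s3 y1 y2 y3 -> tors t0 t1 t2 t3 z1 z2 z3 ->
  pt s0 (s1 * y1) (- (s2 * y2)) (s0 * s1 * s2 * s3) (- (y1 * y2 * y3)) =
  pt t0 (t1 * z1) (- (t2 * z2)) (t0 * t1 * t2 * t3) (- (z1 * z2 * z3)) ->
  [:: s0; s1; s2; s3; y1; y2; y3] = [:: t0; t1; t2; t3; z1; z2; z3].
Proof.
move=> H H' [e1 e2 e3 e4 e5 e6 e7].
have hl : s0 = t0.
  case: (H) => h0 _ _ _ _; case: (H') => h0' _ _ _ _.
  apply: dvdz_anti_pos => //.
  - exact: (G1_dir H' (esym e1) (esym e2) (esym e3) (esym e4) (esym e5) (esym e6)).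
  - exact: (G1_dir H e1 e2 e3 e4 e5 e6).
case: (H) => h0 h1 h2 h3 [c1 c2 c3 [c12 [c13 c23]] rel].
case: (H') => h0' h1' h2' h3' [c1' c2' c3' [c12' [c13' c23']] rel'].
subst t0.
have l0 : s0 != 0 by rewrite gt_eqF.
have hc : s0 * s1 * s2 * s3 = s0 * t1 * t2 * t3.
  have := mulfI l0 e6 => /eqP; rewrite eqrXn2 //; first by move/eqP.
  - by apply/ltW; rewrite !mulr_gt0.
  - by apply/ltW; rewrite !mulr_gt0.
have c0 : s0 * s1 * s2 * s3 != 0.
  by rewrite !mulf_eq0 (gt_eqF h0) (gt_eqF h1) (gt_eqF h2) (gt_eqF h3).
have ha : s1 * y1 = t1 * z1.
  have e3' : s0 * (s0*s1*s2*s3) * (s1*y1) = s0 * (s0*s1*s2*s3) * (t1*z1) by rewrite e3 hc.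
  by apply: (mulfI (mulf_neq0 l0 c0)).
have hb : s2 * y2 = t2 * z2.
  have e5' : s0 * (s0*s1*s2*s3) * (-(s2*y2)) = s0 * (s0*s1*s2*s3) * (-(t2*z2)) by rewrite e5 hc.
  apply: (mulfI (mulf_neq0 l0 c0)); apply: oppr_inj; rewrite -[LHS]mulrN -[RHS]mulrN; exact: e5'.
have [g1 g2 g3] := tors_gcd H.
have [g1' g2' g3'] := tors_gcd H'.
have E1 : s1 = t1 by rewrite -g1 -g1' hc ha.
have E2 : s2 = t2 by rewrite -g2 -g2' hc hb.
have E3 : s3 = t3 by rewrite -g3 -g3' hc ha hb.
subst t1 t2 t3.
have E4 : y1 = z1 by apply: (mulfI (negbT (gt_eqF h1))).
have E5 : y2 = z2 by apply: (mulfI (negbT (gt_eqF h2))).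
have E6 : y3 = z3.
  apply: (mulfI (negbT (gt_eqF h3))).
  have r1 : s3 * y3 = s2 * y2 - s1 * y1 by rewrite -[RHS]add0r -rel; ring.
  have r2 : s3 * z3 = s2 * z2 - s1 * z1 by rewrite -[RHS]add0r -rel'; ring.
  by rewrite r1 r2 ha hb.
by subst.
Qed.

Definition TallC (R : realType) (B : R) (s0 s1 s2 s3 y1 y2 y3 : int) : bool :=
  [&& Psi R s0 s1 s2 s3 y1 y2 y3 <= B,
      s1 * y1 - s2 * y2 + s3 * y3 == 0,
      [&& 0 < s0, 0 < s1, 0 < s2 & 0 < s3],
      [&& coprimez y1 (s0 * s2 * s3), coprimez y2 (s0 * s1 * s3)
        & coprimez y3 (s0 * s1 * s2)]
    & [&& coprimez s1 s2, coprimez s1 s3 & coprimez s2 s3]].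

Lemma TallC_tors (R : realType) (B : R) s0 s1 s2 s3 y1 y2 y3 :
  TallC B s0 s1 s2 s3 y1 y2 y3 ->
  (Psi R s0 s1 s2 s3 y1 y2 y3 <= B) /\ tors s0 s1 s2 s3 y1 y2 y3.
Proof.
move=> /and5P[hP /eqP rel /and4P[h0 h1 h2 h3] /and3P[c1 c2 c3] /and3P[c12 c13 c23]].
by split => //; split => //; split.
Qed.

Lemma tors_TallC (R : realType) (B : R) s0 s1 s2 s3 y1 y2 y3 :
  (Psi R s0 s1 s2 s3 y1 y2 y3 <= B) -> tors s0 s1 s2 s3 y1 y2 y3 ->
  TallC B s0 s1 s2 s3 y1 y2 y3.
Proof.
move=> hP [h0 h1 h2 h3 [c1 c2 c3 [c12 [c13 c23]] rel]].
by rewrite /TallC hP rel eqxx h0 h1 h2 h3 c1 c2 c3 c12 c13 c23.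
Qed.

Lemma Psi_le (R : realType) (B : R) s0 s1 s2 s3 y1 y2 y3 :
  (Psi R s0 s1 s2 s3 y1 y2 y3 <= B) =
  [&& `|s0 ^+ 3 * s1 ^+ 2 * s2 ^+ 2 * s3 ^+ 2|%:~R <= B, `|y1 * y2 * y3|%:~R <= B,
      `|s0 * s1 ^+ 2 * y1 ^+ 2|%:~R <= B & `|s0 * s2 ^+ 2 * y2 ^+ 2|%:~R <= B].
Proof. by rewrite /Psi !ge_max !andbA. Qed.

Lemma geo (k u w : int) : 0 <= k ->
  `|k * u * w| <= `|k * u ^+ 2| \/ `|k * u * w| <= `|k * w ^+ 2|.
Proof.
move=> hk; rewrite !normrM; rewrite ?normrX.
have U0 : 0 <= `|u| by [].
have W0 : 0 <= `|w| by [].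
have K0 : 0 <= `|k| by [].
case: (lerP `|u| `|w|) => h; [right|left]; rewrite -mulrA; apply: (ler_wpM2l K0).
  exact: (ler_wpM2r W0 h).
exact: (ler_wpM2l U0 (ltW h)).
Qed.

Lemma castB (R : realType) (B : R) (z w : int) : `|z| <= `|w| -> `|w|%:~R <= B ->
  (`|z|%N)%:R <= B.
Proof. by move=> h hw; rewrite natr_absz; apply: le_trans hw; rewrite ler_int. Qed.

Lemma castB2 (R : realType) (B : R) (k u w : int) : 0 <= k ->
  `|k * u ^+ 2|%:~R <= B -> `|k * w ^+ 2|%:~R <= B -> (`|(k * u * w)%R|%N)%:R <= B.
Proof. by move=> hk h1 h2; case: (geo u w hk) => h; apply: castB h _. Qed.

Lemma pt_inU l a b c x7 : 0 < l -> c != 0 -> c * x7 = - (l * a * b * (a + b)) ->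
  app7 inU (pt l a b c x7).
Proof.
move=> hl hc h; have := onS_pt h; rewrite /app7 /inU /= => ->.
have n6 : (l * c ^+ 2 == 0) = false.
  by rewrite mulf_eq0 expf_eq0 (gt_eqF hl) /= (negbTE hc).
by rewrite /line1 /line2 /line3 /= n6 !andbF.
Qed.

Definition fT (s0 s1 s2 s3 y1 y2 y3 : int) : seq int :=
  nrm (pt s0 (s1 * y1) (- (s2 * y2)) (s0 * s1 * s2 * s3) (- (y1 * y2 * y3))).

Lemma fA (R : realType) (B : R) s0 s1 s2 s3 y1 y2 y3 : 0 <= B ->
  TallC B s0 s1 s2 s3 y1 y2 y3 ->
  [&& primitive (fT s0 s1 s2 s3 y1 y2 y3), first_nz_pos (fT s0 s1 s2 s3 y1 y2 y3),
      app7 inU (fT s0 s1 s2 s3 y1 y2 y3) & (height (fT s0 s1 s2 s3 y1 y2 y3))%:R <= B] &&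
  (fT s0 s1 s2 s3 y1 y2 y3 \in box 7 (Num.truncn B)).
Proof.
move=> B0 /TallC_tors [hP H]; rewrite /fT.
have hprim := tors_prim H.
case: (H) => h0 h1 h2 h3 [c1 c2 c3 [c12 [c13 c23]] rel].
have cn0 : s0 * s1 * s2 * s3 != 0.
  by rewrite !mulf_eq0 (gt_eqF h0) (gt_eqF h1) (gt_eqF h2) (gt_eqF h3).
set y := pt _ _ _ _ _ in hprim *.
have hU : app7 inU y.
  apply: pt_inU => //.
  have -> : s1 * y1 + - (s2 * y2) = - (s3 * y3) by rewrite -[RHS]add0r -rel; ring.
  ring.
have hnz : has (fun a => a != 0) y.
  have x6n0 : s0 * (s0 * s1 * s2 * s3) ^+ 2 != 0.
    by rewrite mulf_eq0 (gt_eqF h0) expf_eq0 /= (negbTE cn0).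
  by rewrite /y /= x6n0 !orbT.
have hH : (height y)%:R <= B.
  move: hP; rewrite Psi_le => /and4P[P1 P2 P3 P4].
  have e1 : s0 ^+ 3 * s1 ^+ 2 * s2 ^+ 2 * s3 ^+ 2 = s0 * (s0 * s1 * s2 * s3) ^+ 2 by ring.
  have e3 : s0 * s1 ^+ 2 * y1 ^+ 2 = s0 * (s1 * y1) ^+ 2 by ring.
  have e4 : s0 * s2 ^+ 2 * y2 ^+ 2 = s0 * (- (s2 * y2)) ^+ 2 by ring.
  rewrite e1 in P1; rewrite e3 in P3; rewrite e4 in P4.
  have s00 : 0 <= s0 by apply: ltW.
  apply: height_le => // z; rewrite !inE.
  move=> /orP[/eqP->|/orP[/eqP->|/orP[/eqP->|/orP[/eqP->|/orP[/eqP->|/orP[/eqP->|/eqP->]]]]]].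
  - exact: castB2.
  - by rewrite natr_absz.
  - exact: castB2.
  - by rewrite natr_absz.
  - exact: castB2.
  - by rewrite natr_absz.
  - by rewrite natr_absz normrN.
rewrite /nrm; case: ifP => hf.
  rewrite hprim hf hU hH /=; apply: box_of_height => //.
have hprimN : primitive (map -%R y) by rewrite /primitive gcd_seqN.
rewrite hprimN first_nzN // hf inUN // hU heightN hH.
by apply: box_of_height => //; rewrite ?size_map ?heightN.
Qed.

Lemma dvd1_pos (e : int) : 0 <= e -> (e %| 1)%Z -> e = 1.
Proof. by move=> e0; rewrite dvdz1 => /eqP h; rewrite -(gez0_abs e0) h. Qed.

Lemma gcdz_ge0 m n : 0 <= gcdz m n.
Proof. exact: le0z_nat. Qed.

Lemma gcd_fac_inv (s m y : int) : 0 < s -> gcdz (s * m) (s * y) = s -> coprimez y m.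
Proof.
move=> hs; rewrite -mulz_gcdr gtz0_abs // => h.
have : s * gcdz m y = s * 1 by rewrite mulr1.
move/(mulfI (negbT (gt_eqF hs))) => h1.
by rewrite /coprimez gcdzC h1.
Qed.

Lemma cop_by (u v g : int) : g = 1 -> (gcdz u v %| g)%Z -> coprimez u v.
Proof. move=> -> h; rewrite /coprimez; apply/eqP; apply: dvd1_pos => //; exact: gcdz_ge0. Qed.

Lemma gcdz_pos (c a : int) : c != 0 -> 0 < gcdz c a.
Proof. by move=> c0; rewrite lt0r gcdz_ge0 andbT gcdz_eq0 negb_and c0. Qed.

Lemma core x1 x2 x3 x4 x5 x6 x7 : 0 < x6 -> onS x1 x2 x3 x4 x5 x6 x7 ->
  primitive [:: x1; x2; x3; x4; x5; x6; x7] ->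
  exists s0 s1 s2 s3 y1 y2 y3, tors s0 s1 s2 s3 y1 y2 y3 /\
    pt s0 (s1 * y1) (- (s2 * y2)) (s0 * s1 * s2 * s3) (- (y1 * y2 * y3)) =
    [:: x1; x2; x3; x4; x5; x6; x7].
Proof.
move=> h6 hS hprim.
move: hS => /andP[/eqP q1 /andP[/eqP q2 /andP[/eqP q3 /andP[/eqP q4 /andP[/eqP q5
   /andP[/eqP q6 /andP[/eqP q7 /andP[/eqP q8 /eqP q9]]]]]]]].
set g := gcdz (gcdz x3 x5) x6.
have g0 : 0 < g.
  by rewrite lt0r gcdz_ge0 andbT gcdz_eq0 negb_and (gt_eqF h6) orbT.
have gd3 : (g %| x3)%Z by apply: dvdz_trans (dvdz_gcdl _ _) (dvdz_gcdl _ _).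
have gd5 : (g %| x5)%Z by apply: dvdz_trans (dvdz_gcdl _ _) (dvdz_gcdr _ _).
have gd6 : (g %| x6)%Z by apply: dvdz_gcdr.
set a := (x3 %/ g)%Z; set b := (x5 %/ g)%Z; set c := (x6 %/ g)%Z.
have ea : x3 = a * g by rewrite divzK.
have eb : x5 = b * g by rewrite divzK.
have ec : x6 = c * g by rewrite divzK.
have gn0 : g != 0 by rewrite gt_eqF.
have c0 : 0 < c by move: h6; rewrite ec pmulr_lgt0.
have cn0 : c != 0 by rewrite gt_eqF.
have abc1 : gcdz (gcdz a b) c = 1.
  have : gcdz (gcdz a b) c * g = 1 * g.
    rewrite mul1r -[X in _ * X](gtz0_abs g0) mulz_gcdl.
    rewrite -[X in gcdz (_ * X) _](gtz0_abs g0) mulz_gcdl -ea -eb -ec //.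
  exact: (mulIf gn0).
clearbody a b c g; subst x3 x5 x6.
have e1 : c * x1 = g * a * b.
  by apply: (mulfI gn0); apply/eqP; rewrite -subr_eq0; apply/eqP; rewrite -q4; ring.
have e2 : c * x2 = g * a ^+ 2.
  by apply: (mulfI gn0); apply/eqP; rewrite -subr_eq0; apply/eqP; rewrite -q5; ring.
have e4 : c * x4 = g * b ^+ 2.
  by apply: (mulfI gn0); apply/eqP; rewrite -subr_eq0; apply/eqP; rewrite -q6; ring.
have cg : (c %| g)%Z.
  apply: (G1 (bezout3 abc1)).
  - by rewrite -e1 dvdz_mulr.
  - by rewrite -e2 dvdz_mulr.
  - by rewrite (_ : g * c * a = c * (g * a)) ?dvdz_mulr //; ring.
  - by rewrite -e4 dvdz_mulr.
  - by rewrite (_ : g * c * b = c * (g * b)) ?dvdz_mulr //; ring.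
  - by rewrite (_ : g * c ^+ 2 = c * (g * c)) ?dvdz_mulr //; ring.
set l := (g %/ c)%Z.
have el : g = l * c by rewrite divzK.
clearbody l; subst g.
have l0 : 0 < l by move: g0; rewrite pmulr_lgt0.
have ln0 : l != 0 by rewrite gt_eqF.
have ex1 : x1 = l * a * b by apply: (mulfI cn0); rewrite e1; ring.
have ex2 : x2 = l * a ^+ 2 by apply: (mulfI cn0); rewrite e2; ring.
have ex4 : x4 = l * b ^+ 2 by apply: (mulfI cn0); rewrite e4; ring.
subst x1 x2 x4.
have e7 : c * x7 = - (l * a * b * (a + b)).
  apply: (mulfI (mulf_neq0 ln0 cn0)); apply/eqP; rewrite -subr_eq0; apply/eqP.
  by rewrite -q9; ring.
have cl7 : coprimez l x7.
  rewrite /coprimez; apply/eqP; apply: dvd1_pos; first exact: gcdz_ge0.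
  move: hprim; rewrite /primitive; set xs := [:: _; _; _; _; _; _; _] => /eqP hp.
  suff : (gcdz l x7 %| gcd_seq xs)%Z by rewrite hp.
  have dl := dvdz_gcdl l x7; have d7 := dvdz_gcdr l x7.
  rewrite dvd_gcd_seq /= d7 andbT.
  rewrite (_ : a * (l * c) = l * (a * c)); last ring.
  rewrite (_ : b * (l * c) = l * (b * c)); last ring.
  rewrite (_ : c * (l * c) = l * (c * c)); last ring.
  by rewrite -!mulrA !dvdz_mulr.
clear q1 q2 q3 q4 q5 q6 q7 q8 q9 gd3 gd5 gd6 e1 e2 e4 cg.
set s1 := gcdz c a; set s2 := gcdz c b; set s3 := gcdz c (a + b).
have es1 : gcdz c a = s1 by []. have es2 : gcdz c b = s2 by [].
have es3 : gcdz c (a + b) = s3 by [].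
have h1 : 0 < s1 by apply: gcdz_pos. have h2 : 0 < s2 by apply: gcdz_pos.
have h3 : 0 < s3 by apply: gcdz_pos.
have d1c : (s1 %| c)%Z by apply: dvdz_gcdl. have d1a : (s1 %| a)%Z by apply: dvdz_gcdr.
have d2c : (s2 %| c)%Z by apply: dvdz_gcdl. have d2b : (s2 %| b)%Z by apply: dvdz_gcdr.
have d3c : (s3 %| c)%Z by apply: dvdz_gcdl. have d3ab : (s3 %| a + b)%Z by apply: dvdz_gcdr.
clearbody s1 s2 s3.
have c12 : coprimez s1 s2.
  apply: cop_by abc1 _.
  have hd1 := dvdz_gcdl s1 s2; have hd2 := dvdz_gcdr s1 s2.
  by rewrite !dvdz_gcd (dvdz_trans hd1 d1a) (dvdz_trans hd2 d2b) (dvdz_trans hd1 d1c).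
have c13 : coprimez s1 s3.
  apply: cop_by abc1 _.
  have hd1 := dvdz_gcdl s1 s3; have hd2 := dvdz_gcdr s1 s3.
  have da := dvdz_trans hd1 d1a; have dab := dvdz_trans hd2 d3ab.
  have db : (gcdz s1 s3 %| b)%Z by rewrite (_ : b = (a + b) - a) ?rpredB //; ring.
  by rewrite !dvdz_gcd da db (dvdz_trans hd1 d1c).
have c23 : coprimez s2 s3.
  apply: cop_by abc1 _.
  have hd1 := dvdz_gcdl s2 s3; have hd2 := dvdz_gcdr s2 s3.
  have db := dvdz_trans hd1 d2b; have dab := dvdz_trans hd2 d3ab.
  have da : (gcdz s2 s3 %| a)%Z by rewrite (_ : a = (a + b) - b) ?rpredB //; ring.
  by rewrite !dvdz_gcd da db (dvdz_trans hd1 d2c).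
have dsc : (s1 * s2 * s3 %| c)%Z.
  rewrite Gauss_dvdz ?d3c ?andbT; first by rewrite Gauss_dvdz // d1c d2c.
  by rewrite coprimezMl c13 c23.
set s0 := (c %/ (s1 * s2 * s3))%Z; set y1 := (a %/ s1)%Z; set y2 := - (b %/ s2)%Z;
set y3 := - ((a + b) %/ s3)%Z.
have ec : c = s0 * s1 * s2 * s3.
  have e : s0 * (s1 * s2 * s3) = c by rewrite /s0 divzK.
  by rewrite -{1}e; ring.
have ea : a = s1 * y1 by rewrite /y1 mulrC divzK.
have eb : b = - (s2 * y2) by rewrite /y2 mulrN opprK mulrC divzK.
have eab : a + b = - (s3 * y3) by rewrite /y3 mulrN opprK mulrC divzK.
clearbody s0 y1 y2 y3.
have h0 : 0 < s0.
  by move: c0; rewrite ec -!mulrA pmulr_lgt0 // !mulr_gt0.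
have cc1 : coprimez y1 (s0 * s2 * s3).
  apply: (gcd_fac_inv h1).
  by rewrite -ea (_ : s1 * (s0 * s2 * s3) = c) // ec; ring.
have cc2 : coprimez y2 (s0 * s1 * s3).
  apply: (gcd_fac_inv h2).
  by rewrite (_ : s2 * (s0 * s1 * s3) = c) ?ec; [rewrite -ec -gcdzN -eb | ring].
have cc3 : coprimez y3 (s0 * s1 * s2).
  apply: (gcd_fac_inv h3).
  by rewrite (_ : s3 * (s0 * s1 * s2) = c) ?ec; [rewrite -ec -gcdzN -eab | ring].
have rel : s1 * y1 - s2 * y2 + s3 * y3 = 0.
  have r2 : s2 * y2 = - b by rewrite eb opprK.
  have r3 : s3 * y3 = - (a + b) by rewrite eab opprK.
  by rewrite -ea r2 r3; ring.
have sn0 : s1 * s2 * s3 != 0 by rewrite gt_eqF // !mulr_gt0.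
have e7' : s0 * x7 = - (l * (y1 * y2 * y3)).
  apply: (mulfI sn0).
  have -> : s1 * s2 * s3 * (s0 * x7) = c * x7 by rewrite ec; ring.
  by rewrite e7 eab ea eb; ring.
have ls0 : (l %| s0)%Z.
  rewrite -(Gauss_dvdzl _ cl7) e7' rpredN; exact: dvdz_mulr.
have s0l : (s0 %| l)%Z.
  have cs0 : coprimez s0 (y1 * y2 * y3).
    move: cc1 cc2 cc3; rewrite !coprimezMr => /andP[/andP[k1 _] _] /andP[/andP[k2 _] _] /andP[/andP[k3 _] _].
    by rewrite ![coprimez s0 _]coprimez_sym k1 k2 k3.
  rewrite -(Gauss_dvdzr _ cs0) mulrC -rpredN -e7'; exact: dvdz_mulr.
have els : l = s0 by apply: dvdz_anti_pos.
subst l.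
have ex7 : x7 = - (y1 * y2 * y3).
  apply: (mulfI (negbT (gt_eqF h0))); rewrite e7'; ring.
exists s0, s1, s2, s3, y1, y2, y3; split; first by split => //; split.
rewrite -ea -eb -ec -ex7 /pt.
congr [:: _; _; _; _; _; _; _]; ring.
Qed.


Lemma le_absM (z m : int) : m != 0 -> `|z| <= `|z * m|.
Proof.
move=> m0; rewrite normrM; apply: ler_peMr => //.
by rewrite -gtz0_ge1 normr_gt0.
Qed.

Lemma cop0 (m : int) : 0 < m -> coprimez 0 m -> m = 1.
Proof.
move=> m0; rewrite /coprimez gcd0z => /eqP h.
by rewrite -(gtz0_abs m0) h.
Qed.

Lemma le_absM' (z w m : int) : w = z * m -> m != 0 -> `|z| <= `|w|.
Proof. by move=> -> ; apply: le_absM. Qed.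

Ltac nz := rewrite !mulf_eq0 ?expf_eq0 /=;
  repeat match goal with H : is_true (?x != 0) |- _ => rewrite (negbTE H) end; done.

Lemma TB (R : realType) (B : R) s0 s1 s2 s3 y1 y2 y3 : 1 <= B ->
  TallC B s0 s1 s2 s3 y1 y2 y3 ->
  [:: s0; s1; s2; s3; y1; y2; y3] \in box 7 (Num.truncn B).
Proof.
move=> B1 /TallC_tors [hP [h0 h1 h2 h3 [c1 c2 c3 [c12 [c13 c23]] rel]]].
have B0 : 0 <= B by apply: le_trans B1.
move: hP; rewrite Psi_le => /and4P[P1 P2 P3 P4].
have n0 : s0 != 0 by rewrite gt_eqF. have n1 : s1 != 0 by rewrite gt_eqF.
have n2 : s2 != 0 by rewrite gt_eqF. have n3 : s3 != 0 by rewrite gt_eqF.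
have tr : forall z : int, (`|z|%N)%:R <= B -> (`|z| <= Num.truncn B)%N.
  by move=> z hz; rewrite truncn_ge_nat.
have zb : forall z : int, z = 0 -> (`|z|%N)%:R <= B.
  by move=> z ->.
have by1 : (`|y1|%N)%:R <= B.
  have [->|y0] := eqVneq y1 0; first exact: zb.
  apply: castB P3.
  by apply: (le_absM' (m := s0 * s1 ^+ 2 * y1)); [ring | nz].
have by2 : (`|y2|%N)%:R <= B.
  have [->|y0] := eqVneq y2 0; first exact: zb.
  apply: castB P4.
  by apply: (le_absM' (m := s0 * s2 ^+ 2 * y2)); [ring | nz].
have by3 : (`|y3|%N)%:R <= B.
  have [e1|y10] := eqVneq y1 0.
    rewrite e1 in c1 rel.
    have := cop0 _ c1; rewrite !mulr_gt0 // => /(_ isT) e.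
    have e3 : s3 = 1 by nia.
    have e2 : s2 = 1 by nia.
    rewrite e2 e3 in rel.
    by rewrite (_ : y3 = y2) //; lia.
  have [e2|y20] := eqVneq y2 0.
    rewrite e2 in c2 rel.
    have := cop0 _ c2; rewrite !mulr_gt0 // => /(_ isT) e.
    have e3 : s3 = 1 by nia.
    have e1 : s1 = 1 by nia.
    rewrite e1 e3 in rel.
    by rewrite (_ : y3 = - y1) ?abszN //; lia.
  have [->|y30] := eqVneq y3 0; first exact: zb.
  apply: castB P2.
  by apply: (le_absM' (m := y1 * y2)); [ring | nz].
rewrite mem_box /=; apply/and4P; split; try apply: tr; try exact: by1.
- apply: castB P1.
  by apply: (le_absM' (m := s0 ^+ 2 * s1 ^+ 2 * s2 ^+ 2 * s3 ^+ 2)); [ring | nz].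
- apply: castB P1.
  by apply: (le_absM' (m := s0 ^+ 3 * s1 * s2 ^+ 2 * s3 ^+ 2)); [ring | nz].
- apply: castB P1.
  by apply: (le_absM' (m := s0 ^+ 3 * s1 ^+ 2 * s2 * s3 ^+ 2)); [ring | nz].
apply/and4P; split; try apply: tr => //.
apply: castB P1.
by apply: (le_absM' (m := s0 ^+ 3 * s1 ^+ 2 * s2 ^+ 2 * s3)); [ring | nz].
by rewrite andbT; apply: tr.
Qed.

Lemma hx (R : realType) (B : R) (z : int) xs : z \in xs -> (height xs)%:R <= B ->
  `|z|%:~R <= B.
Proof.
move=> hz hB; rewrite -natr_absz; apply: le_trans hB.
by rewrite ler_nat; apply: height_ge.
Qed.

Lemma fCpos (R : realType) (B : R) x1 x2 x3 x4 x5 x6 x7 : 0 < x6 ->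
  onS x1 x2 x3 x4 x5 x6 x7 -> primitive [:: x1; x2; x3; x4; x5; x6; x7] ->
  (height [:: x1; x2; x3; x4; x5; x6; x7])%:R <= B ->
  exists s0 s1 s2 s3 y1 y2 y3, TallC B s0 s1 s2 s3 y1 y2 y3 /\
    pt s0 (s1 * y1) (- (s2 * y2)) (s0 * s1 * s2 * s3) (- (y1 * y2 * y3)) =
    [:: x1; x2; x3; x4; x5; x6; x7].
Proof.
move=> h6 hS hp hB.
have [s0 [s1 [s2 [s3 [y1 [y2 [y3 [H e]]]]]]]] := core h6 hS hp.
exists s0, s1, s2, s3, y1, y2, y3; split => //.
apply: tors_TallC => //.
move: e => [_ e2 _ e4 _ e6 e7].
rewrite Psi_le; apply/and4P; split.
- rewrite (_ : s0 ^+ 3 * s1 ^+ 2 * s2 ^+ 2 * s3 ^+ 2 = x6); first by apply: hx hB; rewrite !in_cons eqxx ?orbT.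
  by rewrite -e6; ring.
- rewrite (_ : y1 * y2 * y3 = - x7); first by rewrite normrN; apply: hx hB; rewrite !in_cons eqxx ?orbT.
  by rewrite -e7 opprK.
- rewrite (_ : s0 * s1 ^+ 2 * y1 ^+ 2 = x2); first by apply: hx hB; rewrite !in_cons eqxx ?orbT.
  by rewrite -e2; ring.
- rewrite (_ : s0 * s2 ^+ 2 * y2 ^+ 2 = x4); first by apply: hx hB; rewrite !in_cons eqxx ?orbT.
  by rewrite -e4; ring.
Qed.

Lemma inU_x6 x1 x2 x3 x4 x5 x6 x7 : inU x1 x2 x3 x4 x5 x6 x7 -> x6 != 0.
Proof.
move=> /and4P[hS n1 n2 n3]; apply/eqP => e6; subst x6.
move: hS => /andP[q1 /andP[q2 /andP[q3 /andP[q4 /andP[q5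
   /andP[q6 /andP[q7 /andP[q8 q9]]]]]]]].
have e3 : x3 = 0.
  by move: q5; rewrite mulr0 sub0r oppr_eq0 expf_eq0 => /andP[_ /eqP].
have e5 : x5 = 0.
  by move: q6; rewrite mulr0 sub0r oppr_eq0 expf_eq0 => /andP[_ /eqP].
subst x3 x5.
have [e1|e1] := eqVneq x1 0.
  subst x1.
  move: q1; rewrite expr0n /= sub0r oppr_eq0 mulf_eq0 => /orP[/eqP e2|/eqP e4].
    by move: n1; rewrite /line1 e2 !eqxx.
  by move: n2; rewrite /line2 e4 !eqxx.
have e14 : x1 + x4 = 0.
  move: q7; rewrite mul0r addr0 (_ : x1 ^+ 2 + x1 * x4 = x1 * (x1 + x4)); last ring.
  by rewrite mulf_eq0 (negbTE e1) /= => /eqP.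
have e12 : x1 + x2 = 0.
  move: q8; rewrite mul0r addr0 (_ : x1 * x2 + x1 ^+ 2 = x1 * (x1 + x2)); last ring.
  by rewrite mulf_eq0 (negbTE e1) /= => /eqP.
by move: n3; rewrite /line3 e14 e12 !eqxx.
Qed.

Lemma fC7 (R : realType) (B : R) x1 x2 x3 x4 x5 x6 x7 :
  [&& primitive [:: x1; x2; x3; x4; x5; x6; x7],
      first_nz_pos [:: x1; x2; x3; x4; x5; x6; x7],
      app7 inU [:: x1; x2; x3; x4; x5; x6; x7]
    & (height [:: x1; x2; x3; x4; x5; x6; x7])%:R <= B] ->
  exists s0 s1 s2 s3 y1 y2 y3, TallC B s0 s1 s2 s3 y1 y2 y3 /\
    fT s0 s1 s2 s3 y1 y2 y3 = [:: x1; x2; x3; x4; x5; x6; x7].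
Proof.
move=> /and4P[hp hf hU hH].
have x6n0 : x6 != 0 by move: hU; rewrite /app7 /=; apply: inU_x6.
have hnz : has (fun a => a != 0) [:: x1; x2; x3; x4; x5; x6; x7].
  by rewrite /= x6n0 !orbT.
case: (ltrgtP x6 0) => h6; last by rewrite h6 eqxx in x6n0.
  have hU' := hU; rewrite -inUN // in hU'.
  move: hU'; rewrite /app7 /= => /and4P[hS _ _ _].
  have hp' : primitive [:: - x1; - x2; - x3; - x4; - x5; - x6; - x7].
    by move: hp; rewrite /primitive -gcd_seqN.
  have hH' : (height [:: - x1; - x2; - x3; - x4; - x5; - x6; - x7])%:R <= B.
    by move: hH; rewrite -heightN.
  have [s0 [s1 [s2 [s3 [y1 [y2 [y3 [T e]]]]]]]] :=
    fCpos (B := B) (x6 := - x6) (x7 := - x7) (x1 := -x1) (x2 := -x2) (x3 := -x3)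
      (x4 := -x4) (x5 := -x5) ltac:(by rewrite oppr_gt0) hS hp' hH'.
  exists s0, s1, s2, s3, y1, y2, y3; split => //.
  rewrite /fT e.
  exact: (nrm_N hnz hf).
move: (hU); rewrite /app7 /= => /and4P[hS _ _ _].
have [s0 [s1 [s2 [s3 [y1 [y2 [y3 [T e]]]]]]]] := fCpos h6 hS hp hH.
exists s0, s1, s2, s3, y1, y2, y3; split => //.
by rewrite /fT e; apply: nrm_id.
Qed.

Definition Tv (R : realType) (B : R) (v : seq int) : bool :=
  TallC B (nth 0 v 0) (nth 0 v 1) (nth 0 v 2) (nth 0 v 3) (nth 0 v 4) (nth 0 v 5) (nth 0 v 6).
Definition fv (v : seq int) : seq int :=
  fT (nth 0 v 0) (nth 0 v 1) (nth 0 v 2) (nth 0 v 3) (nth 0 v 4) (nth 0 v 5) (nth 0 v 6).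

Lemma pt_pos s0 s1 s2 s3 y1 y2 y3 : tors s0 s1 s2 s3 y1 y2 y3 ->
  0 < nth 0 (pt s0 (s1 * y1) (- (s2 * y2)) (s0 * s1 * s2 * s3) (- (y1 * y2 * y3))) 5.
Proof.
case=> h0 h1 h2 h3 _ /=.
by rewrite mulr_gt0 // exprn_gt0 // !mulr_gt0.
Qed.

Lemma nrm_inj7 (x y : seq int) : size x = 7%N -> size y = 7%N ->
  0 < nth 0 x 5 -> 0 < nth 0 y 5 -> nrm x = nrm y -> x = y.
Proof.
move=> sx sy hx hy.
have nN : forall z : seq int, size z = 7%N -> nth 0 (map -%R z) 5 = - nth 0 z 5.
  by move=> z sz; rewrite (nth_map 0) // sz.
have mI : injective (map (@GRing.opp int)).
  by apply: inj_map; apply: oppr_inj.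
case: (nrm_cases x) => ->; case: (nrm_cases y) => -> // e.
- by move: hx; rewrite e nN // oppr_gt0 => /(lt_trans hy); rewrite ltxx.
- by move: hy; rewrite -e nN // oppr_gt0 => /(lt_trans hx); rewrite ltxx.
- exact: mI.
Qed.

Lemma N_eq (R : realType) (B : R) : 1 <= B ->
  N_U B = count (Tv B) (box 7 (Num.truncn B)).
Proof.
move=> B1; have B0 : 0 <= B by apply: le_trans B1.
rewrite /N_U; apply/eqP; rewrite eqn_leq; apply/andP; split.
  apply: (count_le_surj (f := fv)); first exact: box_uniq.
  move=> y yb hQ.
  have sy : size y = 7%N by move: yb; rewrite mem_box => /andP[/eqP].
  rewrite (seq7 sy) in hQ.
  have [s0 [s1 [s2 [s3 [y1 [y2 [y3 [T e]]]]]]]] := fC7 hQ.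
  exists [:: s0; s1; s2; s3; y1; y2; y3]; split.
  - exact: TB.
  - exact: T.
  - by rewrite /fv /= e; apply: esym; apply: seq7.
apply: (count_le_inj (f := fv)); first exact: box_uniq.
  move=> v vb hT; exact: fA.
move=> v w vb hv wb hw e.
have sv : size v = 7%N by move: vb; rewrite mem_box => /andP[/eqP].
have sw : size w = 7%N by move: wb; rewrite mem_box => /andP[/eqP].
have [_ Hv] := TallC_tors hv. have [_ Hw] := TallC_tors hw.
move: e; rewrite /fv /fT => e.
rewrite (seq7 sv) (seq7 sw); apply: (tors_inj Hv Hw).
by apply: nrm_inj7 e => //; [exact: (pt_pos Hv) | exact: (pt_pos Hw)].
Qed.

Definition negy (v : seq int) : seq int :=
  [:: nth 0 v 0; nth 0 v 1; nth 0 v 2; nth 0 v 3; - nth 0 v 4; - nth 0 v 5; - nth 0 v 6].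

Lemma TallC_N (R : realType) (B : R) s0 s1 s2 s3 y1 y2 y3 :
  TallC B s0 s1 s2 s3 (- y1) (- y2) (- y3) = TallC B s0 s1 s2 s3 y1 y2 y3.
Proof.
rewrite /TallC /Psi !coprimeNz !sqrrN !mulrN !mulNr opprK normrN.
congr (_ && _); congr (_ && _).
by rewrite -!opprD -opprB oppr_eq0; congr (_ == 0); ring.
Qed.

Lemma Tcond_E (R : realType) (B : R) s0 s1 s2 s3 y1 y2 y3 :
  Tcond B s0 s1 s2 s3 y1 y2 y3 = TallC B s0 s1 s2 s3 y1 y2 y3 && (0 < y1).
Proof.
rewrite /Tcond /TallC.
by case: (0 < y1); rewrite ?andbT ?andbF.
Qed.

Lemma negy_box K v : v \in box 7 K -> negy v \in box 7 K.
Proof.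
rewrite !mem_box => /andP[/eqP sv]; rewrite (seq7 sv) /= => /and5P[-> -> -> -> /and4P[a5 a6 a7 _]].
by rewrite !abszN a5 a6 a7.
Qed.

Lemma negy_inj v w : size v = 7%N -> size w = 7%N -> negy v = negy w -> v = w.
Proof.
move=> sv sw [e0 e1 e2 e3 /oppr_inj e4 /oppr_inj e5 /oppr_inj e6].
by rewrite (seq7 sv) (seq7 sw) e0 e1 e2 e3 e4 e5 e6.
Qed.

Lemma count_neg (R : realType) (B : R) :
  count (fun v => Tv B v && (nth 0 v 4 < 0)) (box 7 (Num.truncn B)) =
  count (fun v => Tv B v && (0 < nth 0 v 4)) (box 7 (Num.truncn B)).
Proof.
have sz : forall v, v \in box 7 (Num.truncn B) -> size v = 7%N.
  by move=> v; rewrite mem_box => /andP[/eqP].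
apply/eqP; rewrite eqn_leq; apply/andP; split.
  apply: (count_le_inj (f := negy)); first exact: box_uniq.
    move=> v vb /andP[hT hn]; rewrite /Tv in hT; rewrite negy_box // andbT.
    by rewrite /Tv /= TallC_N hT /= oppr_gt0.
  by move=> v w vb _ wb _; apply: negy_inj; apply: sz.
apply: (count_le_inj (f := negy)); first exact: box_uniq.
  move=> v vb /andP[hT hn]; rewrite /Tv in hT; rewrite negy_box // andbT.
  by rewrite /Tv /= TallC_N hT /= oppr_lt0.
by move=> v w vb _ wb _; apply: negy_inj; apply: sz.
Qed.

Lemma sq_le (R : realType) (B : R) (z : int) : 0 <= B ->
  `|z ^+ 2|%:~R <= B -> (`|z| <= Num.truncn (Num.sqrt B))%N.
Proof.
move=> B0 h; rewrite truncn_ge_nat ?sqrtr_ge0 //.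
rewrite -(ger0_norm (ler0n R `|z|)) -sqrtr_sqr ler_sqrt //.
by move: h; rewrite normrX natr_absz rmorphXn.
Qed.

Lemma P0_shape (R : realType) (B : R) v : v \in box 7 (Num.truncn B) ->
  Tv B v -> nth 0 v 4 = 0 ->
  [/\ v = [:: 1; nth 0 v 1; 1; 1; 0; nth 0 v 5; nth 0 v 5],
      `|nth 0 v 1 ^+ 2|%:~R <= B & `|nth 0 v 5 ^+ 2|%:~R <= B].
Proof.
move=> vb hT e4.
have sv : size v = 7%N by move: vb; rewrite mem_box => /andP[/eqP].
move: hT; rewrite /Tv => /TallC_tors [hP [h0 h1 h2 h3 [c1 c2 c3 [c12 [c13 c23]] rel]]].
rewrite e4 in c1 rel.
have e := cop0 (mulr_gt0 (mulr_gt0 h0 h2) h3) c1.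
have E0 : nth 0 v 0 = 1 by nia.
have E2 : nth 0 v 2 = 1 by nia.
have E3 : nth 0 v 3 = 1 by nia.
rewrite E2 E3 in rel.
have E6 : nth 0 v 6 = nth 0 v 5 by lia.
move: hP; rewrite Psi_le E0 E2 E3 => /and4P[P1 _ _ P4].
split.
- by rewrite {1}(seq7 sv) E0 E2 E3 e4 E6.
- by move: P1; rewrite !expr1n !mul1r !mulr1.
- by move: P4; rewrite !expr1n !mul1r.
Qed.

Lemma count_zero (R : realType) (B : R) : 1 <= B ->
  (count (fun v => Tv B v && (nth 0 v 4 == 0)) (box 7 (Num.truncn B)))%:R <= 9 * B.
Proof.
move=> B1; have B0 : 0 <= B by apply: le_trans B1.
set m := Num.truncn (Num.sqrt B).
have hc : (count (fun v => Tv B v && (nth 0 v 4 == 0)%R) (box 7 (Num.truncn B))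
           <= count predT (box 2 m))%N.
  apply: (count_le_inj (f := fun v : seq int => [:: nth (0 : int) v 1; nth (0 : int) v 5])).
  - exact: box_uniq.
  - move=> v vb /andP[hT /eqP e4].
    have [_ P1 P4] := P0_shape vb hT e4.
    by rewrite mem_box /= !sq_le.
  - move=> v w vb /andP[hv /eqP ev] wb /andP[hw /eqP ew] [e1 e5].
    have [-> _ _] := P0_shape vb hv ev.
    have [-> _ _] := P0_shape wb hw ew.
    by rewrite e1 e5.
rewrite count_predT size_box in hc.
have m1 : (1 <= m)%N.
  by rewrite /m truncn_ge_nat ?sqrtr_ge0 // -sqrtr1 ler_sqrt.
have hm : (m%:R : R) <= Num.sqrt B by rewrite /m truncn_le sqrtr_ge0.
apply: le_trans (_ : ((9 * m ^ 2)%N)%:R <= _).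
  rewrite ler_nat; apply: leq_trans hc _.
  rewrite expnS expn1; nia.
rewrite natrM natrX.
have -> : (9%N%:R : R) = 9 by [].
rewrite ler_pM2l //.
rewrite -(sqr_sqrtr B0) lerXn2r ?nnegrE ?sqrtr_ge0 //.
Qed.

Unset Implicit Arguments.

Theorem lemma3p3 (R : realType) :
  exists C : R, forall B : R, 1 <= B ->
    `|(N_U B)%:R - 2 * (T_count B)%:R| <= C * B.
Proof.
exists 9 => B B1.
rewrite N_eq //.
rewrite (@count_split3 _ _ (fun v => Tv B v && (0 < nth 0 v 4))
           (fun v => Tv B v && (nth 0 v 4 < 0)) (fun v => Tv B v && (nth 0 v 4 == 0))).
  rewrite count_neg.
  have -> : count (fun v => Tv B v && (0 < nth 0 v 4)) (box 7 (Num.truncn B)) = T_count B.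
    by rewrite /T_count; apply: eq_count => v; rewrite Tcond_E.
  have hE := count_zero B1.
  move: (T_count B) (count _ _) hE => T E hE.
  have -> : ((T + T + E)%:R - 2 * T%:R : R) = E%:R by rewrite !natrD; ring.
  by rewrite ger0_norm.
move=> v; case: (Tv B v) => //=.
by case: (ltrgtP (nth 0 v 4) 0).
Qed.
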